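(* Let $d\ge 2$, $m>1$, $0\le s\le m-1$ and $t$ be integers with $\gcd(d,t)=1$ and $ds\equiv -t\pmod m$, and let $a$ be an indeterminate. Then for $0\le k\le s$, \[ \frac{(aq^t;q^d)_{s-k}}{(q^d/a;q^d)_{s-k}}\equiv (-a)^{s-2k}q^{s(ds-d+2t)/2+(d-t)k}\frac{(aq^t;q^d)_k}{(q^d/a;q^d)_k}\pmod{\Phi_m(q)}. \]
   Context: For an indeterminate $q$, $(x;q)_k=(1-x)(1-xq)\cdots(1-xq^{k-1})$ (with $(x;q)_0=1$). $\Phi_m(q)$ is the $m$-th cyclotomic polynomial in $q$. A congruence $A\equiv B\pmod{\Phi_m(q)}$ between rational functions in $q$ and $a$ means that $A-B$, written as a quotient of polynomials with denominator coprime to $\Phi_m(q)$, has numerator divisible by $\Phi_m(q)$. *)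

(* Defs.v *)
From HB Require Import structures.
From mathcomp Require Import all_boot all_order all_algebra all_field.
Set Implicit Arguments. Unset Strict Implicit. Unset Printing Implicit Defensive.
Import Order.TTheory GRing.Theory Num.Theory.
Local Open Scope ring_scope.

(* Polynomial ring Q[a][q]: outer variable 'X is q, inner variable is a. *)
Definition Rqa := {poly {poly rat}}.
Definition Kqa := {fraction Rqa}.

Definition qvar : Kqa := tofrac ('X : Rqa).
Definition avar : Kqa := tofrac ((('X : {poly rat})%:P) : Rqa).

Definition PhiQ (m : nat) : Rqa := map_poly (fun c : int => (c%:~R : {poly rat})) 'Phi_m.

Definition qpoch (x b : Kqa) (k : nat) : Kqa := \prod_(i < k) (1 - x * b ^+ i).

Definition rdvd (x y : Rqa) : Prop := exists c : Rqa, y = c * x.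
Definition rcoprime (x y : Rqa) : Prop :=
  forall g : Rqa, rdvd g x -> rdvd g y -> g \is a GRing.unit.

Definition congPhi (m : nat) (A B : Kqa) : Prop :=
  exists N D : Rqa, D != 0 /\ rcoprime D (PhiQ m) /\ rdvd (PhiQ m) N /\
    (A - B) * tofrac D = tofrac N.

(* Main.v *)
Require Import Defs.
From HB Require Import structures.
From mathcomp Require Import all_boot all_order all_algebra all_field.
From mathcomp Require Import zify ring lra.
Import Order.TTheory GRing.Theory Num.Theory.
Local Open Scope ring_scope.

Definition Phim (m : nat) : {poly rat} := map_poly intr 'Phi_m.

Lemma PhiQE m : PhiQ m = (Phim m)^:P.
Proof.
rewrite /PhiQ /Phim -map_poly_comp; apply: eq_map_poly => c /=.
by rewrite rmorph_int.
Qed.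

Lemma Phim_dvd m : (0 < m)%N -> Phim m %| 'X^m - 1.
Proof.
move=> m0; have := congr1 (map_poly (intr : int -> rat)) (prod_Cyclotomic m0).
rewrite rmorphB rmorph1 rmorphXn /= map_polyX rmorph_prod /= => <-.
have : m \in divisors m by rewrite -dvdn_divisors.
move=> Hm; rewrite (perm_big _ (perm_to_rem Hm)) big_cons /=.
by apply: dvdp_mulr.
Qed.

Lemma PhiQ_dvd m : (0 < m)%N -> rdvd (PhiQ m) ('X^m - 1).
Proof.
move=> m0; have /dvdpP [c Hc] := Phim_dvd _ m0.
exists c^:P; rewrite PhiQE -rmorphM -Hc rmorphB rmorph1 rmorphXn /= map_polyX //.
Qed.

Lemma coprime_X_Phim m : (0 < m)%N -> coprimep 'X (Phim m).
Proof.
move=> m0; apply: (coprimep_dvdl (Phim_dvd _ m0)).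
have -> : ('X : {poly rat}) = 'X - 0%:P by rewrite subr0.
rewrite coprimep_sym coprimep_XsubC /root !hornerE expr0n.
have -> : (m == 0%N) = false by case: m m0.
by rewrite sub0r oppr_eq0 oner_eq0.
Qed.

Definition leada (D : Rqa) : {poly rat} := lead_coef (swapXY D).
Definition good m (D : Rqa) := leada D != 0 /\ coprimep (leada D) (Phim m).

Lemma Phim_neq0 m : Phim m != 0.
Proof.
have : Phim m \is monic.
  by rewrite /Phim monicE lead_coef_map_eq (monicP (Cyclotomic_monic m)) ?oner_eq0.
by move/monic_neq0.
Qed.

Lemma good_neq0 m D : good m D -> D != 0.
Proof. by case=> H _; move: H; rewrite /leada lead_coef_eq0 swapXY_eq0. Qed.

Lemma goodP m D : good m D -> rcoprime D (PhiQ m).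
Proof.
move=> [L0 cop] g [c Hc] [c' Hc'].
have HP : (Phim m)%:P = swapXY c' * swapXY g.
  by rewrite -rmorphM -Hc' PhiQE; symmetry; apply: swapXY_map_polyC.
have P0 : (Phim m)%:P != 0 by rewrite polyC_eq0 Phim_neq0.
have c'0 : swapXY c' != 0 by apply: contraNneq P0; rewrite HP => ->; rewrite mul0r.
have g0 : swapXY g != 0 by apply: contraNneq P0; rewrite HP => ->; rewrite mulr0.
have Hs : size (swapXY g) = 1%N.
  have := @size_mul _ (swapXY c') (swapXY g) c'0 g0; rewrite -HP size_polyC Phim_neq0.
  move: (c'0) (g0); rewrite -!size_poly_gt0.
  case: (size (swapXY c')) => [//|a]; case: (size (swapXY g)) => [//|b] _ _ /=.
  lia.
have HG : swapXY g = (lead_coef (swapXY g))%:P.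
  by rewrite [LHS]size1_polyC ?Hs // lead_coefE Hs.
set h := lead_coef (swapXY g) in HG.
have h1 : h %| leada D.
  by rewrite /leada Hc rmorphM lead_coefM /= dvdp_mull.
have h2 : h %| Phim m.
  by have := congr1 lead_coef HP; rewrite lead_coefC lead_coefM -/h => ->; rewrite dvdp_mull.
have /coprimepP Hcop := cop.
have := Hcop h h1 h2; move/eqp_size; rewrite size_poly1 => hs.
have hU : h \is a GRing.unit.
  rewrite poly_unitE hs eqxx /= unitfE.
  have : h != 0 by rewrite -size_poly_eq0 hs.
  by rewrite -lead_coef_eq0 lead_coefE hs.
have h0 : h != 0 by rewrite -size_poly_eq0 hs.
have Hg : h^:P = g by have := swapXYK g; rewrite HG swapXY_polyC.
have Hh : h = (h`_0)%:P by apply: size1_polyC; rewrite hs.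
have c00 : h`_0 != 0 by move: hU; rewrite poly_unitE => /andP[_]; rewrite unitfE.
rewrite -Hg Hh map_polyC /= poly_unitE size_polyC polyC_eq0 c00 coefC eqxx /=.
by rewrite poly_unitE size_polyC c00 coefC eqxx /= unitfE.
Qed.

Lemma good_mul m D1 D2 : good m D1 -> good m D2 -> good m (D1 * D2).
Proof.
move=> [n1 c1] [n2 c2]; rewrite /good /leada rmorphM lead_coefM.
by rewrite mulf_neq0 // coprimepMl c1 c2.
Qed.

Lemma good_const m (al : {poly rat}) : al != 0 -> coprimep al (Phim m) -> good m (al^:P).
Proof. by move=> a0 c; rewrite /good /leada swapXY_map_polyC lead_coefC. Qed.

Lemma good_lin m (al be : {poly rat}) : be != 0 -> coprimep be (Phim m) ->
  good m (al^:P + be^:P * ('X)%:P).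
Proof.
move=> b0 c; rewrite /good /leada rmorphD rmorphM /= !swapXY_map_polyC swapXY_Y.
rewrite addrC lead_coefDl ?lead_coefMX ?lead_coefC //.
rewrite size_mulX ?polyC_eq0 // [size be%:P]size_polyC b0.
by apply: leq_ltn_trans (size_polyC_leq1 _) _.
Qed.

Section Cong.
Variable m : nat.

Definition loc (x : Kqa) := exists N D, good m D /\ x * tofrac D = tofrac N.
Definition inI (x : Kqa) := exists N D, good m D /\ rdvd (PhiQ m) N /\ x * tofrac D = tofrac N.
Definition cong (x y : Kqa) := inI (x - y).
Definition unitL (x : Kqa) := x != 0 /\ loc x /\ loc x^-1.

Lemma good1 : good m 1.
Proof. by rewrite /good /leada rmorph1 lead_coef1 oner_eq0 coprime1p. Qed.

Lemma tofrac_neq0 D : good m D -> tofrac D != 0 :> Kqa.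
Proof. by move/good_neq0; rewrite tofrac_eq. Qed.

Lemma loc_tofrac p : loc (tofrac p).
Proof. by exists p, 1; rewrite tofrac1 mulr1; split => //; apply: good1. Qed.

Lemma loc_add x y : loc x -> loc y -> loc (x + y).
Proof.
move=> [N1 [D1 [g1 e1]]] [N2 [D2 [g2 e2]]].
exists (N1 * D2 + N2 * D1), (D1 * D2); split; first exact: good_mul.
by rewrite tofracD !tofracM -e1 -e2; ring.
Qed.

Lemma loc_mul x y : loc x -> loc y -> loc (x * y).
Proof.
move=> [N1 [D1 [g1 e1]]] [N2 [D2 [g2 e2]]].
exists (N1 * N2), (D1 * D2); split; first exact: good_mul.
by rewrite !tofracM -e1 -e2; ring.
Qed.

Lemma loc_opp x : loc x -> loc (- x).
Proof. by move=> [N [D [g e]]]; exists (- N), D; rewrite tofracN -e mulNr. Qed.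

Lemma loc1 : loc 1.
Proof. by rewrite -tofrac1; apply: loc_tofrac. Qed.

Lemma loc_exp x n : loc x -> loc (x ^+ n).
Proof. by move=> lx; elim: n => [|n IH]; [rewrite expr0; apply: loc1 | rewrite exprS; apply: loc_mul]. Qed.

Lemma inI_add x y : inI x -> inI y -> inI (x + y).
Proof.
move=> [N1 [D1 [g1 [[c1 h1] e1]]]] [N2 [D2 [g2 [[c2 h2] e2]]]].
exists (N1 * D2 + N2 * D1), (D1 * D2); split; first exact: good_mul.
split; first by exists (c1 * D2 + c2 * D1); rewrite h1 h2; ring.
by rewrite tofracD !tofracM -e1 -e2; ring.
Qed.

Lemma inI_mull c x : loc c -> inI x -> inI (c * x).
Proof.
move=> [N1 [D1 [g1 e1]]] [N2 [D2 [g2 [[c2 h2] e2]]]].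
exists (N1 * N2), (D1 * D2); split; first exact: good_mul.
split; first by exists (N1 * c2); rewrite h2; ring.
by rewrite !tofracM -e1 -e2; ring.
Qed.

Lemma inI_opp x : inI x -> inI (- x).
Proof. by move=> H; rewrite -mulN1r; apply: inI_mull => //; apply/loc_opp/loc1. Qed.

Lemma inI_tofrac p : rdvd (PhiQ m) p -> inI (tofrac p).
Proof. by move=> H; exists p, 1; rewrite tofrac1 mulr1; split; [apply: good1|]. Qed.

Lemma inI0 : inI 0.
Proof. by rewrite -tofrac0; apply: inI_tofrac; exists 0; rewrite mul0r. Qed.

Lemma inI_congPhi x y : cong x y -> congPhi m x y.
Proof.
move=> [N [D [g [h e]]]]; exists N, D; split; first exact: good_neq0 g.
by split; first exact: goodP.
Qed.

Lemma cong_refl x : cong x x.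
Proof. by rewrite /cong subrr; apply: inI0. Qed.

Lemma cong_sym x y : cong x y -> cong y x.
Proof. by rewrite /cong -opprB => /inI_opp; rewrite opprK. Qed.

Lemma cong_trans x y z : cong x y -> cong y z -> cong x z.
Proof. by move=> h1 h2; rewrite /cong (_ : x - z = (x - y) + (y - z)); [apply: inI_add|ring]. Qed.

Lemma cong_eq x y : x = y -> cong x y.
Proof. by move=> ->; apply: cong_refl. Qed.

Lemma cong_mul x y z w : loc y -> loc z -> cong x y -> cong z w -> cong (x * z) (y * w).
Proof.
move=> ly lz h1 h2; rewrite /cong (_ : x * z - y * w = z * (x - y) + y * (z - w)); last by ring.
by apply: inI_add; apply: inI_mull.
Qed.

Lemma cong_mull c x y : loc c -> cong x y -> cong (c * x) (c * y).
Proof. by move=> lc h; rewrite /cong -mulrBr; apply: inI_mull. Qed.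

Lemma unitL_good D : good m D -> unitL (tofrac D).
Proof.
move=> g; split; first exact: tofrac_neq0.
split; first exact: loc_tofrac.
by exists 1, D; rewrite mulVf ?tofrac1 ?tofrac_neq0.
Qed.

Lemma unitL_mul x y : unitL x -> unitL y -> unitL (x * y).
Proof.
move=> [x0 [l1 l2]] [y0 [l3 l4]]; split; first by apply: mulf_neq0 x0 y0.
by split; [apply: loc_mul | rewrite invfM; apply: loc_mul].
Qed.

Lemma unitL_inv x : unitL x -> unitL x^-1.
Proof. by move=> [x0 [l1 l2]]; rewrite /unitL invrK invr_eq0. Qed.

Lemma unitL_opp x : unitL x -> unitL (- x).
Proof. by move=> [x0 [l1 l2]]; rewrite /unitL invrN oppr_eq0; split => //; split; apply: loc_opp. Qed.

Lemma unitL_exp x n : unitL x -> unitL (x ^+ n).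
Proof.
move=> [x0 [l1 l2]]; split; first by rewrite expf_neq0.
by split; rewrite -?exprVn; apply: loc_exp.
Qed.

Lemma unitL_expz x (z : int) : unitL x -> unitL (x ^ z).
Proof.
move=> ux; case: z => n; first by rewrite -exprnP; apply: unitL_exp.
by rewrite NegzE -invr_expz -exprnP; apply/unitL_inv/unitL_exp.
Qed.

Lemma unitL_loc x : unitL x -> loc x.
Proof. by case=> _ []. Qed.

Lemma cong_divr u x y : unitL u -> cong x y -> cong (x / u) (y / u).
Proof.
move=> [_ [_ l]] h; rewrite /cong -mulrBl mulrC; exact: inI_mull.
Qed.

Lemma unitL_prod n (F : 'I_n -> Kqa) : (forall i, unitL (F i)) -> unitL (\prod_(i < n) F i).
Proof.
move=> H; elim/big_ind: _ => //; last exact: unitL_mul.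
by rewrite -tofrac1; apply/unitL_good/good1.
Qed.

Lemma cong_prod n (F G : 'I_n -> Kqa) : (forall i, loc (F i)) -> (forall i, loc (G i)) ->
  (forall i, cong (F i) (G i)) -> cong (\prod_(i < n) F i) (\prod_(i < n) G i).
Proof.
move=> lF lG H; elim: n F G lF lG H => [|n IH] F G lF lG H.
  by rewrite !big_ord0; apply: cong_refl.
rewrite !big_ord_recr /=; apply: cong_mul => //.
- by elim/big_ind: _ => //; [apply: loc1|apply: loc_mul].
- by apply: IH => i.
Qed.

End Cong.

Section Spec.
Variable m : nat.
Hypothesis m0 : (0 < m)%N.

Local Notation A := avar.
Local Notation Q := qvar.

Lemma Q_neq0 : Q != 0.
Proof. by rewrite /qvar tofrac_eq polyX_eq0. Qed.

Lemma A_neq0 : A != 0.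
Proof. by rewrite /avar tofrac_eq polyC_eq0 polyX_eq0. Qed.

Lemma good_f1 n : good m (1 - ('X : {poly rat})%:P * 'X^n).
Proof.
have := @good_lin m 1 (- 'X^n).
rewrite rmorph1 rmorphN rmorphXn /= map_polyX oppr_eq0 => H.
have -> : 1 - ('X : {poly rat})%:P * 'X^n = 1 + - 'X^n * ('X)%:P by rewrite mulNr mulrC.
apply: H; first by rewrite -size_poly_eq0 size_polyXn.
rewrite -scaleN1r coprimepZl ?oppr_eq0 ?oner_eq0 //.
exact/coprimep_expl/coprime_X_Phim.
Qed.

Lemma good_f2 n : good m ('X^n - ('X : {poly rat})%:P).
Proof.
have := @good_lin m ('X^n) (-1).
rewrite rmorphN rmorph1 rmorphXn /= map_polyX mulN1r oppr_eq0 oner_eq0 => H.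
apply: H => //.
by rewrite -scaleN1r coprimepZl ?oppr_eq0 ?oner_eq0 // coprime1p.
Qed.

Lemma good_X : good m 'X.
Proof.
have := @good_const m 'X; rewrite map_polyX; apply; first by rewrite polyX_eq0.
exact: coprime_X_Phim.
Qed.

Lemma unitL_Q : unitL m Q.
Proof. exact/unitL_good/good_X. Qed.

Lemma unitL_A : unitL m A.
Proof.
have := @good_lin m 0 1; rewrite rmorph0 rmorph1 add0r mul1r oner_eq0 coprime1p.
by move=> H; apply: unitL_good; apply: H.
Qed.

Definition fe (e : int) : Kqa := 1 - A * Q ^ e.
Definition ge (e : int) : Kqa := 1 - Q ^ e / A.

Lemma Qz_neq0 (e : int) : Q ^ e != 0.
Proof. by rewrite expfz_eq0 negb_and Q_neq0 orbT. Qed.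

Lemma unitL_fe e : unitL m (fe e).
Proof.
rewrite /fe; case: e => n.
  rewrite -exprnP; have := @unitL_good m _ (good_f1 n).
  by rewrite tofracB tofrac1 tofracM tofracXn.
rewrite NegzE -invr_expz -exprnP.
have -> : 1 - A * (Q ^+ n.+1)^-1 = (Q ^+ n.+1 - A) / Q ^+ n.+1.
  by rewrite mulrBl mulfV ?expf_neq0 ?Q_neq0.
apply: unitL_mul; last by apply/unitL_inv/unitL_exp/unitL_Q.
by have := @unitL_good m _ (good_f2 n.+1); rewrite tofracB tofracXn.
Qed.

Lemma ge_fe e : ge e = - (Q ^ e / A) * fe (- e).
Proof.
rewrite /ge /fe -invr_expz.
have E : Q ^ e / A * (A * (Q ^ e)^-1) = 1.
  by rewrite -mulrA mulKf ?A_neq0 // mulfV ?Qz_neq0.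
by rewrite mulrBr mulr1 mulNr E opprK addrC.
Qed.

Lemma fe_ge e : fe e = - (A * Q ^ e) * ge (- e).
Proof.
rewrite /ge /fe -invr_expz.
have E : A * Q ^ e * ((Q ^ e)^-1 / A) = 1.
  by rewrite mulrC -mulrA mulKf ?A_neq0 // mulVf ?Qz_neq0.
by rewrite mulrBr mulr1 mulNr E opprK addrC.
Qed.

Lemma unitL_Qz (e : int) : unitL m (Q ^ e).
Proof. exact/unitL_expz/unitL_Q. Qed.

Lemma unitL_ge e : unitL m (ge e).
Proof.
rewrite ge_fe; apply: unitL_mul; last exact: unitL_fe.
by apply/unitL_opp/unitL_mul; [apply: unitL_Qz | apply/unitL_inv/unitL_A].
Qed.

Lemma cong_Qm : cong m (Q ^+ m) 1.
Proof.
rewrite /cong /qvar -tofracXn -tofrac1 -tofracB; apply: inI_tofrac.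
exact: PhiQ_dvd.
Qed.

Lemma cong_pow1 u n : unitL m u -> cong m u 1 -> cong m (u ^+ n) 1.
Proof.
move=> uu h; elim: n => [|n IH]; first by rewrite expr0; apply: cong_refl.
rewrite exprS -(mulr1 1); apply: cong_mul => //; first exact: loc1.
exact/loc_exp/unitL_loc.
Qed.

Lemma cong_inv1 u : unitL m u -> cong m u 1 -> cong m (u ^-1) 1.
Proof.
move=> [u0 [l1 l2]] h; rewrite /cong.
have -> : u^-1 - 1 = u^-1 * (- (u - 1)) by rewrite opprB mulrBr mulr1 mulVf.
by apply: inI_mull => //; apply: inI_opp.
Qed.

Lemma cong_powz1 u (j : int) : unitL m u -> cong m u 1 -> cong m (u ^ j) 1.
Proof.
move=> uu h; case: j => n; first by rewrite -exprnP; apply: cong_pow1.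
rewrite NegzE -invr_expz -exprnP; apply: cong_inv1; first exact: unitL_exp.
exact: cong_pow1.
Qed.

Lemma cong_Qexp (z w : int) : (z == w %[mod m])%Z -> cong m (Q ^ z) (Q ^ w).
Proof.
rewrite eqz_mod_dvd => /divzK H.
have -> : z = w + (m%:Z * ((z - w) %/ m)%Z) by rewrite mulrC H; ring.
rewrite expfzDr ?Q_neq0 // -exprz_exp -(mulr1 (Q ^ w)) -mulrA mul1r.
apply: cong_mull; first exact/unitL_loc/unitL_Qz.
apply: cong_powz1; first by rewrite -exprnP; apply/unitL_exp/unitL_Q.
by rewrite -exprnP; apply: cong_Qm.
Qed.

Lemma cong_fe (e e' : int) : (e == e' %[mod m])%Z -> cong m (fe e) (fe e').
Proof.
move=> h; rewrite /cong /fe.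
have -> : 1 - A * Q ^ e - (1 - A * Q ^ e') = A * (Q ^ e' - Q ^ e) by ring.
by apply: inI_mull; [apply/unitL_loc/unitL_A | apply: cong_sym; apply: cong_Qexp].
Qed.

Lemma cong_ge (e e' : int) : (e == e' %[mod m])%Z -> cong m (ge e) (ge e').
Proof.
move=> h; rewrite /cong /ge.
have -> : 1 - Q ^ e / A - (1 - Q ^ e' / A) = - A^-1 * (Q ^ e - Q ^ e') by move: (A^-1) => Ai; ring.
apply: inI_mull; last by apply: cong_Qexp.
by apply/loc_opp/unitL_loc/unitL_inv/unitL_A.
Qed.

End Spec.

Section Main.
Variable m : nat.
Hypothesis m0 : (0 < m)%N.
Variables d t : int.

Local Notation A := avar.
Local Notation Q := qvar.

Definition qP n := \prod_(i < n) fe (t + d * (i : nat)%:Z).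
Definition qR n := \prod_(i < n) ge (d + d * (i : nat)%:Z).
Definition Ssum k : int := \sum_(i < k) ((i : nat)%:Z).

Lemma qpochP n : qpoch (A * Q ^ t) (Q ^ d) n = qP n.
Proof.
apply: eq_bigr => i _; rewrite /fe exprnP exprz_exp -mulrA -expfzDr //.
exact: Q_neq0.
Qed.

Lemma qpochR n : qpoch (Q ^ d / A) (Q ^ d) n = qR n.
Proof.
apply: eq_bigr => i _; rewrite /ge exprnP exprz_exp mulrAC -expfzDr //.
exact: Q_neq0.
Qed.

Lemma mono_prod (c : Kqa) (u v : int) (k : nat) :
  \prod_(i < k) (c * Q ^ (u + v * (i : nat)%:Z)) = c ^+ k * Q ^ (u * k%:Z + v * Ssum k).
Proof.
elim: k => [|k IH]; first by rewrite big_ord0 /Ssum big_ord0 expr0 mulr0 mulr0 addr0 expr0z mulr1.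
rewrite big_ord_recr /= IH /Ssum big_ord_recr /= -/(Ssum k) exprSr.
have -> : u * (k.+1)%:Z + v * (Ssum k + k%:Z) = (u * k%:Z + v * Ssum k) + (u + v * k%:Z).
  by rewrite intS; move: (Ssum k) => S; ring.
rewrite (expfzDr (u * k%:Z + v * Ssum k)) ?Q_neq0 //; ring.
Qed.

Lemma unitL_qP n : unitL m (qP n).
Proof. by apply: unitL_prod => i; apply: (@unitL_fe m m0). Qed.

Lemma unitL_qR n : unitL m (qR n).
Proof. by apply: unitL_prod => i; apply: (@unitL_ge m m0). Qed.


Lemma partP n k : (d * (n + k)%:Z == - t %[mod m])%Z ->
  cong m (qP (n + k)) (qP n * ((- A) ^+ k * Q ^ (- d * k%:Z + - d * Ssum k) * qR k)).
Proof.
move=> H; rewrite /qP big_split_ord /=.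
apply: cong_mull; first by apply: unitL_loc; apply: unitL_prod => i; apply: (@unitL_fe m m0).
rewrite (reindex_inj rev_ord_inj) /=.
apply: (@cong_trans m _ (\prod_(i < k) fe (- d + - d * (i : nat)%:Z))).
  apply: cong_prod => i; [apply/unitL_loc/(@unitL_fe m m0) | apply/unitL_loc/(@unitL_fe m m0) | ].
  apply: (@cong_fe m m0); rewrite eqz_mod_dvd; move: H; rewrite eqz_mod_dvd.
  have hi := ltn_ord i.
  have -> : ((n + (k - i.+1))%N : int) = n%:Z + k%:Z - (i : nat)%:Z - 1 by lia.
  by rewrite (_ : t + _ - _ = d * (n + k)%:Z - - t) // PoszD; ring.
apply: cong_eq.
rewrite (eq_bigr (fun i : 'I_k => ((- A) * Q ^ (- d + - d * (i : nat)%:Z)) * ge (d + d * (i : nat)%:Z))).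
  rewrite big_split /= mono_prod; reflexivity.
by move=> i _; rewrite fe_ge -mulNr (_ : - (- d + - d * (i : nat)%:Z) = d + d * (i : nat)%:Z) //; ring.
Qed.


Lemma partR n k : (d * (n + k)%:Z == - t %[mod m])%Z ->
  cong m (qR (n + k)) (qR n * (((- A)^-1) ^+ k * Q ^ (- t * k%:Z + - d * Ssum k) * qP k)).
Proof.
move=> H; rewrite /qR big_split_ord /=.
apply: cong_mull; first by apply: unitL_loc; apply: unitL_prod => i; apply: (@unitL_ge m m0).
rewrite (reindex_inj rev_ord_inj) /=.
apply: (@cong_trans m _ (\prod_(i < k) ge (- t + - d * (i : nat)%:Z))).
  apply: cong_prod => i; [apply/unitL_loc/(@unitL_ge m m0) | apply/unitL_loc/(@unitL_ge m m0) | ].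
  apply: (@cong_ge m m0); rewrite eqz_mod_dvd; move: H; rewrite eqz_mod_dvd.
  have hi := ltn_ord i.
  have -> : ((n + (k - i.+1))%N : int) = n%:Z + k%:Z - (i : nat)%:Z - 1 by lia.
  by rewrite (_ : d + _ - _ = d * (n + k)%:Z - - t) // PoszD; ring.
apply: cong_eq.
rewrite (eq_bigr (fun i : 'I_k => ((- A)^-1 * Q ^ (- t + - d * (i : nat)%:Z)) * fe (t + d * (i : nat)%:Z))).
  rewrite big_split /= mono_prod; reflexivity.
move=> i _; rewrite ge_fe invrN mulNr [_ * Q ^ _]mulrC.
by rewrite (_ : - (- t + - d * (i : nat)%:Z) = t + d * (i : nat)%:Z) //; ring.
Qed.

End Main.

Lemma Ssum2 k : Ssum k * 2 = k%:Z * (k%:Z - 1).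
Proof.
elim: k => [|k IH]; first by rewrite /Ssum big_ord0 mul0r.
rewrite /Ssum big_ord_recr /= -/(Ssum k) mulrDl IH intS; ring.
Qed.

Definition mon (x y : int) : Kqa := (- avar) ^ x * qvar ^ y.

Lemma B_neq0 : - avar != 0.
Proof. by rewrite oppr_eq0 A_neq0. Qed.

Lemma monM x y x' y' : mon x y * mon x' y' = mon (x + x') (y + y').
Proof.
rewrite /mon (expfzDr _ _ B_neq0) (expfzDr _ _ Q_neq0); ring.
Qed.

Lemma monV x y : (mon x y)^-1 = mon (- x) (- y).
Proof. by rewrite /mon invfM !invr_expz mulrC. Qed.


Lemma E1gen (F : fieldType) (r1 r2 M1 M2 M3 p2 : F) : r1 != 0 ->
  r1 * (M2 * p2) / (r1 * r2 * M3 * M1) = M2 / (M3 * M1) * (p2 / r2).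
Proof.
move=> r10; rewrite !invfM.
transitivity (M2 * p2 * r2^-1 * M3^-1 * M1^-1 * (r1 * r1^-1)); first by ring.
by rewrite mulfV // mulr1; ring.
Qed.

Lemma E2gen (F : fieldType) (r1 r2 M1 M3 p1 : F) : r2 != 0 -> M3 != 0 -> M1 != 0 ->
  M3 * (p1 * (M1 * r2)) / (r1 * r2 * M3 * M1) = p1 / r1.
Proof.
move=> r20 M30 M10; rewrite !invfM.
transitivity (p1 * r1^-1 * ((M3 * M3^-1) * (M1 * M1^-1) * (r2 * r2^-1))); first by ring.
by rewrite !mulfV // !mulr1.
Qed.

Lemma monGen (F : fieldType) (B Q : F) (x1 y1 x2 y2 x3 y3 : int) : B != 0 -> Q != 0 ->
  (B ^ x1 * Q ^ y1) / ((B ^ x2 * Q ^ y2) * (B ^ x3 * Q ^ y3)) =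
  B ^ (x1 - x2 - x3) * Q ^ (y1 - y2 - y3).
Proof.
move=> B0 Q0; rewrite !invfM !invr_expz !(expfzDr _ _ B0) !(expfzDr _ _ Q0); ring.
Qed.

Lemma cong_eqs m x x' y y' : x = x' -> y = y' -> cong m x y -> cong m x' y'.
Proof. by move=> -> ->. Qed.

Theorem lemma1 (d : int) (m s : nat) (t : int) (k : nat) :
  2 <= d -> (1 < m)%N -> (s <= m - 1)%N ->
  coprimez d t -> (d * s%:Z == - t %[mod m%:Z])%Z ->
  (k <= s)%N ->
  congPhi m
    (qpoch (avar * qvar ^ t) (qvar ^ d) (s - k)
       / qpoch (qvar ^ d / avar) (qvar ^ d) (s - k))
    ((- avar) ^ (s%:Z - 2 * k%:Z)
       * qvar ^ (divz (s%:Z * (d * s%:Z - d + 2 * t)) 2 + (d - t) * k%:Z)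
       * (qpoch (avar * qvar ^ t) (qvar ^ d) k
          / qpoch (qvar ^ d / avar) (qvar ^ d) k)).
Proof.
move=> hd hm hs hcop H hk.
have m0 : (0 < m)%N by apply: ltnW.
rewrite !qpochP !qpochR; apply: inI_congPhi.
have h1 := @partP m m0 d t (s - k) k; rewrite subnK // in h1; have {}h1 := h1 H.
have h2 := @partR m m0 d t (s - k) k; rewrite subnK // in h2; have {}h2 := h2 H.
have h3 := @partR m m0 d t 0 s; rewrite add0n in h3; have {}h3 := h3 H.
rewrite /qR big_ord0 mul1r -/(qR d 0) in h3.
set p1 := qP d t (s - k) in h1 *; set p2 := qP d t k in h1 h2 *.
set r1 := qR d (s - k) in h2 *; set r2 := qR d k in h1 *.
set M1 := _ * _ ^ _ in h1; set M2 := _ * _ ^ _ in h2; set M3 := _ * _ ^ _ in h3.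
have eM1 : M1 = mon k%:Z (- d * k%:Z + - d * Ssum k) by rewrite /M1 /mon exprnP.
have eM2 : M2 = mon (- k%:Z) (- t * k%:Z + - d * Ssum k)
  by rewrite /M2 /mon exprVn exprnP invr_expz.
have eM3 : M3 = mon (- s%:Z) (- t * s%:Z + - d * Ssum s)
  by rewrite /M3 /mon exprVn exprnP invr_expz.
have um : forall x y, unitL m (mon x y).
  move=> x y; apply: unitL_mul; apply: unitL_expz; last exact: unitL_Q.
  exact/unitL_opp/unitL_A.
have h4 : cong m (r1 * (M2 * p2)) (M3 * (p1 * (M1 * r2))).
  apply: (@cong_trans m _ _ _ (@cong_sym m _ _ h2)); apply: (@cong_trans m _ _ _ h3).
  by apply: cong_mull => //; rewrite eM3; apply/unitL_loc/um.
have uu : unitL m (r1 * r2 * M3 * M1).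
  by apply: unitL_mul; [apply: unitL_mul; [apply: unitL_mul|]|];
    rewrite ?eM3 ?eM1; try apply: um; [apply: unitL_qR | apply: unitL_qR].
have h5 := @cong_divr m _ _ _ uu h4.
have r10 : r1 != 0 by case: (@unitL_qR m m0 d (s - k)).
have r20 : r2 != 0 by case: (@unitL_qR m m0 d k).
have [M30 _] : unitL m M3 by rewrite eM3; apply: um.
have [M10 _] : unitL m M1 by rewrite eM1; apply: um.
clearbody p1 p2 r1 r2 M1 M2 M3.
have h6 := @cong_eqs m _ _ _ _ (E1gen _ r1 r2 M1 M2 M3 p2 r10) (E2gen _ r1 r2 M1 M3 p1 r20 M30 M10) h5.
have Ec : M2 / (M3 * M1) = (- avar) ^ (s%:Z - 2 * k%:Z) *
    qvar ^ (divz (s%:Z * (d * s%:Z - d + 2 * t)) 2 + (d - t) * k%:Z).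
  rewrite eM1 eM2 eM3 /mon.
  apply: etrans (monGen _ _ _ _ _ _ _ _ _ B_neq0 Q_neq0) _.
  have -> : s%:Z * (d * s%:Z - d + 2 * t) = (t * s%:Z + d * Ssum s) * 2.
    transitivity (t * s%:Z * 2 + d * (Ssum s * 2)); last by ring.
    by rewrite Ssum2; ring.
  rewrite mulzK //.
  by congr (_ ^ _ * _ ^ _); ring.
exact: (@cong_eqs m _ _ _ _ (erefl _) (congr1 (fun z => z * (p2 / r2)) Ec) (@cong_sym m _ _ h6)).
Qed.
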